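(* Let $\sigma,\tau\in S_n$ be almost similar permutations of order $m$, and let $\mathrm{fix}(\sigma)$ denote the number of fixed points of $\sigma$. Then: (1) if $\mathrm{fix}(\sigma)=\mathrm{fix}(\tau)$, then $\sigma$ and $\tau$ are conjugate in $S_n$; (2) for every prime $p$ dividing $m$, $p$ divides $\mathrm{fix}(\sigma)-\mathrm{fix}(\tau)$.
   Context: Two permutations $\sigma,\tau\in S_n$ are called almost similar if they have the same order $m$ and for every divisor $k\neq1$ of $m$, $\sigma^k$ and $\tau^k$ are conjugate in $S_n$. *)

(* Defs.v *)
From mathcomp Require Import all_boot all_order all_fingroup.
From mathcomp Require Import all_algebra.
Set Implicit Arguments. Unset Strict Implicit. Unset Printing Implicit Defensive.

Definition conj_Sn (n : nat) (s t : 'S_n) : Prop :=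
  exists g : 'S_n, t = (s ^ g)%g.

Definition almost_similar (n : nat) (s t : 'S_n) : Prop :=
  #[s]%g = #[t]%g /\
  forall k : nat, k %| #[s]%g -> k != 1 -> conj_Sn (s ^+ k)%g (t ^+ k)%g.

Definition nfix (n : nat) (s : 'S_n) : nat := #|[set x : 'I_n | s x == x]|.

(* Main.v *)
Require Import Defs.
From mathcomp Require Import all_boot all_order all_fingroup all_algebra.
From mathcomp Require Import zify.

Set Implicit Arguments. Unset Strict Implicit. Unset Printing Implicit Defensive.

Section Cyc.
Variable T : finType.
Implicit Types s t : {perm T}.

Definition ordp s x := #|porbit s x|.
Definition rep s x := odflt x [pick y in porbit s x].

Lemma ordp_gt0 s x : 0 < ordp s x.
Proof. by rewrite lt0n card_porbit_neq0. Qed.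

Lemma ordp_le s x : ordp s x <= #|T|.
Proof. exact: max_card. Qed.

Lemma rep_mem s x : rep s x \in porbit s x.
Proof. rewrite /rep; case: pickP => [y //|/(_ x)]; by rewrite porbit_id. Qed.

Lemma rep_eq s x y : porbit s x = porbit s y -> rep s x = rep s y.
Proof.
move=> E; rewrite /rep E; case: pickP => [z _|] //.
by move/(_ y); rewrite porbit_id.
Qed.

Lemma porbit_rep s x : porbit s (rep s x) = porbit s x.
Proof. apply/eqP; rewrite eq_porbit_mem; exact: rep_mem. Qed.

Lemma repK s x : rep s (rep s x) = rep s x.
Proof. by apply: rep_eq; rewrite porbit_rep. Qed.

Lemma ordp_rep s x : ordp s (rep s x) = ordp s x.
Proof. by rewrite /ordp porbit_rep. Qed.

Lemma rep_eqE s x y : (rep s x == rep s y) = (x \in porbit s y).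
Proof.
apply/eqP/idP => [E|H].
  by rewrite -eq_porbit_mem -(porbit_rep s x) E porbit_rep.
by apply: rep_eq; apply/eqP; rewrite eq_porbit_mem.
Qed.

Lemma porbit_iter s x i : porbit s (iter i s x) = porbit s x.
Proof. by rewrite -permX porbit_perm. Qed.

Lemma ordp_iter s x i : ordp s (iter i s x) = ordp s x.
Proof. by rewrite /ordp porbit_iter. Qed.

Lemma iter_mod s x a : iter a s x = iter (a %% ordp s x) s x.
Proof.
rewrite {1}(divn_eq a (ordp s x)) addnC iterD.
suff -> : forall q, iter (q * ordp s x) s x = x by [].
elim=> [|q IH] //=; by rewrite mulSn iterD IH iter_porbit.
Qed.

Lemma iter_inj s x a b : a < ordp s x -> b < ordp s x ->
  iter a s x = iter b s x -> a = b.
Proof.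
move=> Ha Hb E; apply/eqP.
rewrite -(nth_uniq x _ _ (uniq_traject_porbit s x)) ?size_traject //.
by rewrite !nth_traject // E.
Qed.

Lemma fixX s x k : ((s ^+ k)%g x == x) = (ordp s x %| k).
Proof.
rewrite permX iter_mod /dvdn.
apply/eqP/eqP => [E|->] //.
apply: (@iter_inj s x _ 0) => //; first by rewrite ltn_pmod ?ordp_gt0.
exact: ordp_gt0.
Qed.

Definition Rs s d := [set r | (rep s r == r) && (ordp s r == d)].
Definition Nc s d := #|[set x | ordp s x == d]|.
Definition Fc s k := #|[set x | (s ^+ k)%g x == x]|.

Lemma N_Rs s d : Nc s d = #|Rs s d| * d.
Proof.
rewrite /Nc -sum1_card (partition_big (rep s) (fun r => r \in Rs s d)).
  rewrite -sum_nat_const; apply: eq_bigr => r.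
  rewrite /Rs inE => /andP[/eqP Er /eqP Od].
  rewrite -Od; transitivity (\sum_(x in porbit s r) 1); last by rewrite sum1_card.
  apply: eq_bigl => x.
  have -> : (rep s x == r) = (x \in porbit s r) by rewrite -{1}Er rep_eqE.
  case Hx: (x \in porbit s r); rewrite ?andbT ?andbF // inE.
  have E : porbit s x = porbit s r by apply/eqP; rewrite eq_porbit_mem.
  rewrite /ordp E; exact: eqxx.
move=> x; rewrite /Rs !inE repK ordp_rep => ->; by rewrite eqxx.
Qed.

Lemma F_sum s k : Fc s k = \sum_(d < #|T|.+1 | d %| k) Nc s d.
Proof.
rewrite /Fc -sum1_card (partition_big (fun x => (inord (ordp s x) : 'I_#|T|.+1))
   (fun d : 'I_#|T|.+1 => d %| k)).
  apply: eq_bigr => d dk; rewrite /Nc -sum1_card; apply: eq_bigl => x.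
  rewrite !inE fixX -[inord _ == d]val_eqE /= inordK ?ltnS ?ordp_le //.
  by case: eqP => [->|]; rewrite ?andbT ?andbF.
by move=> x; rewrite inE fixX inordK ?ltnS ?ordp_le.
Qed.

Lemma N0 s d : (d == 0) || (#|T| < d) -> Nc s d = 0.
Proof.
move=> H; apply/eqP; rewrite cards_eq0; apply/eqP/setP => x; rewrite !inE.
apply/negbTE; apply/eqP => E; move: H; rewrite -E.
by rewrite eqn0Ngt ordp_gt0 /= ltnNge ordp_le.
Qed.

Lemma N_eq s t : (forall k, 0 < k -> Fc s k = Fc t k) -> forall d, Nc s d = Nc t d.
Proof.
move=> HF d; elim/ltn_ind: d => d IH.
case: d IH => [|d] IH; first by rewrite !N0.
case: (ltnP #|T| d.+1) => [lt|le]; first by rewrite !N0 // lt orbT.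
have := HF d.+1 isT; rewrite !F_sum.
pose j := (@Ordinal #|T|.+1 d.+1 le).
have Pj : j %| d.+1 by rewrite dvdnn.
rewrite (bigD1 j Pj) [in X in _ = X -> _](bigD1 j Pj).
rewrite (eq_bigr (fun i : 'I_#|T|.+1 => Nc t i)) => [/eqP|i /andP[Hd Hne]].
  by rewrite eqn_add2r => /eqP.
apply: IH; rewrite ltn_neqAle dvdn_leq // andbT.
by move: Hne; rewrite -[i == j]val_eqE.
Qed.

Section Conj.
Variables s t : {perm T}.
Hypothesis HR : forall d, 0 < d -> #|Rs s d| = #|Rs t d|.

Definition hmap r := nth r (enum (Rs t (ordp s r))) (index r (enum (Rs s (ordp s r)))).

Lemma hmapP r : rep s r = r -> hmap r \in Rs t (ordp s r).
Proof.
move=> E; rewrite /hmap -mem_enum; apply: mem_nth.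
rewrite -cardE -HR ?ordp_gt0 // cardE index_mem mem_enum /Rs inE E !eqxx.
done.
Qed.

Lemma hmap_rep r : rep s r = r -> rep t (hmap r) = hmap r.
Proof. by move/hmapP; rewrite /Rs inE => /andP[/eqP]. Qed.

Lemma hmap_ord r : rep s r = r -> ordp t (hmap r) = ordp s r.
Proof. by move/hmapP; rewrite /Rs inE => /andP[_ /eqP]. Qed.

Lemma hmap_inj r r' : rep s r = r -> rep s r' = r' -> hmap r = hmap r' -> r = r'.
Proof.
move=> E E' H.
have Od : ordp s r = ordp s r' by rewrite -(hmap_ord E) -(hmap_ord E') H.
have rin : r \in enum (Rs s (ordp s r)) by rewrite mem_enum /Rs inE E !eqxx.
have r'in : r' \in enum (Rs s (ordp s r)) by rewrite mem_enum /Rs inE E' Od !eqxx.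
have sz : size (enum (Rs s (ordp s r))) = size (enum (Rs t (ordp s r))).
  by rewrite -!cardE HR ?ordp_gt0.
move: H; rewrite /hmap -Od.
rewrite (set_nth_default r' r); last by rewrite -sz index_mem.
move/eqP; rewrite nth_uniq ?enum_uniq -?sz ?index_mem // => /eqP Hi.
by rewrite -(nth_index r rin) Hi (nth_index r r'in).
Qed.

Definition idx x := index x (traject s (rep s x) (ordp s x)).
Definition gmap x := iter (idx x) t (hmap (rep s x)).

Lemma idx_lt x : idx x < ordp s x.
Proof.
have Hx : x \in traject s (rep s x) (ordp s x).
  by rewrite -ordp_rep /ordp -porbit_traject porbit_rep porbit_id.
by rewrite /idx -[X in _ < X](size_traject s (rep s x)) index_mem.
Qed.

Lemma idxE x : iter (idx x) s (rep s x) = x.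
Proof.
have Hx : x \in traject s (rep s x) (ordp s x).
  by rewrite -ordp_rep /ordp -porbit_traject porbit_rep porbit_id.
by rewrite -(nth_traject _ (idx_lt x)) nth_index.
Qed.

Lemma g_s x : gmap (s x) = t (gmap x).
Proof.
have Rsx : rep s (s x) = rep s x by apply: rep_eq; exact: (porbit_iter s x 1).
have Osx : ordp s (s x) = ordp s x by exact: (ordp_iter s x 1).
rewrite /gmap Rsx -iterS.
set r := rep s x.
have Hr : rep s r = r by rewrite /r repK.
have Or : ordp s r = ordp s x by rewrite /r ordp_rep.
have E : iter (idx (s x)) s r = iter (idx x).+1 s r.
  by rewrite /r -Rsx idxE Rsx iterS idxE.
rewrite iter_mod [in RHS]iter_mod hmap_ord //.
rewrite iter_mod [in RHS]iter_mod in E.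
congr iter; apply: (iter_inj _ _ E); by rewrite ltn_pmod ?ordp_gt0.
Qed.

Lemma g_inj : injective gmap.
Proof.
move=> x y; rewrite /gmap => E.
have Hx : rep s (rep s x) = rep s x by rewrite repK.
have Hy : rep s (rep s y) = rep s y by rewrite repK.
have Pu : porbit t (hmap (rep s x)) = porbit t (hmap (rep s y)).
  by rewrite -(porbit_iter t _ (idx x)) E porbit_iter.
have U : hmap (rep s x) = hmap (rep s y).
  by rewrite -(hmap_rep Hx) -(hmap_rep Hy); apply: rep_eq.
have R : rep s x = rep s y by apply: hmap_inj.
rewrite U in E.
have I : idx x = idx y.
  apply: (iter_inj _ _ E); rewrite hmap_ord // ordp_rep ?idx_lt //.
  by rewrite -ordp_rep -R ordp_rep idx_lt.
by rewrite -(idxE x) -(idxE y) I R.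
Qed.

Lemma conj_ex : exists g : {perm T}, t = (s ^ g)%g.
Proof.
exists (perm g_inj); apply/permP => y.
by rewrite -[y](permKV (perm g_inj)) permJ !permE g_s.
Qed.

End Conj.

Lemma conj_of_N s t : (forall d, Nc s d = Nc t d) -> exists g : {perm T}, t = (s ^ g)%g.
Proof.
move=> HN; apply: conj_ex => d d0.
apply/eqP; rewrite -(eqn_pmul2r d0) -!N_Rs HN //.
Qed.

Lemma fix_conj (u g : {perm T}) : Fc (u ^ g)%g 1 = Fc u 1.
Proof.
rewrite /Fc !expg1 -(card_preimset _ (@perm_inj _ g)); apply: eq_card => x.
by rewrite !inE permJ (inj_eq perm_inj).
Qed.

Lemma ordp_dvd s x : ordp s x %| #[s]%g.
Proof. by rewrite -fixX expg_order perm1. Qed.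

Lemma F_gcd s k : Fc s k = Fc s (gcdn k #[s]%g).
Proof. by apply: eq_card => x; rewrite !inE !fixX dvdn_gcd ordp_dvd andbT. Qed.

Lemma fix1 s x : (s x == x) = (ordp s x == 1).
Proof. by rewrite -dvdn1 -fixX expg1. Qed.

Lemma F_prime s p : prime p -> Fc s p = Fc s 1 + Nc s p.
Proof.
move=> pp; rewrite /Fc /Nc expg1 -cardsUI.
have -> : [set x | s x == x] :&: [set x | ordp s x == p] = set0.
  apply/setP => x; rewrite !inE fix1.
  case: eqP => [->|] //=; by rewrite eq_sym eqn_leq leqNgt prime_gt1.
rewrite cards0 addn0; apply: eq_card => x; rewrite !inE fixX fix1.
apply/idP/orP => [H|[/eqP->|/eqP->]]; rewrite ?dvd1n ?dvdnn //.
by case/primeP: pp => _ /(_ _ H) /orP.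
Qed.

End Cyc.

Lemma Fc_nfix n (s : 'S_n) : Fc s 1 = nfix s.
Proof. by rewrite /Fc /nfix expg1. Qed.

Theorem lemma3p7 (n : nat) (s t : 'S_n) :
  almost_similar s t ->
  (nfix s = nfix t -> conj_Sn s t) /\
  (forall p : nat, prime p -> p %| #[s]%g ->
     ((p%:Z) %| ((nfix s)%:Z - (nfix t)%:Z)%R)%Z).
Proof.
move=> [Hm Hk].
have Fk : forall k, k %| #[s]%g -> k != 1 -> Fc s k = Fc t k.
  move=> k kd k1; case: (Hk k kd k1) => g E.
  have := fix_conj (s ^+ k)%g g; rewrite /Fc !expg1 -E => H.
  by rewrite H.
split.
  move=> Hf; apply: conj_of_N; apply: N_eq => k k0.
  rewrite F_gcd [in RHS]F_gcd -Hm.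
  case: (eqVneq (gcdn k #[s]%g) 1) => [->|ne]; first by rewrite !Fc_nfix.
  by apply: Fk => //; exact: dvdn_gcdr.
move=> p pp pd.
have p1 : p != 1 by rewrite neq_ltn prime_gt1 ?orbT.
have := Fk p pd p1.
rewrite (F_prime s pp) (F_prime t pp) !Fc_nfix !N_Rs => E.
apply/dvdzP; exists (Posz #|Rs t p| - Posz #|Rs s p|)%R.
lia.
Qed.
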